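(* Let $f_1,\dots,f_\Lambda$ be candidate models, $\mathcal L:\{f_\lambda\}_{\lambda=1}^\Lambda\to\mathbb R$ a performance metric, $U:(0,1)\to\mathbb R_+$, and fix $\delta\in(0,1)$. Suppose the pairwise comparison subroutine $\mathcal A$ satisfies: for any two models $h_1,h_2\in\{f_\lambda\}_{\lambda=1}^\Lambda$, its output $\widehat h\in\{h_1,h_2\}$ satisfies \[ \mathbb P\big(\mathcal L(\widehat h)-\min\{\mathcal L(h_1),\mathcal L(h_2)\}\le U(\delta)\big)\ge1-\delta. \] Then the output $\widehat f$ of the tournament procedure (context) run with $\mathcal A$ satisfies \[ \mathbb P\Big(\mathcal L(\widehat f)-\min_{\lambda\in[\Lambda]}\mathcal L(f_\lambda)\le2U(\delta)\Big)\ge1-\Lambda^2\delta. \]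
   Context: Tournament procedure (ATOMS): $S=\{f_1,\dots,f_\Lambda\}$; while $|S|>1$: choose a pivot $f\in S$ uniformly at random; let $S'=\{f'\in S\setminus\{f\}:\mathcal A(f,f')=f'\}$, where $\mathcal A(f,f')\in\{f,f'\}$ is the model output by $\mathcal A$ on the pair; if $S'=\emptyset$ output $f$, otherwise set $S\leftarrow S'$. If $|S|=1$, output its unique element. *)

(* Defs.v *)
From HB Require Import structures.
From mathcomp Require Import all_boot all_order all_algebra.
From mathcomp Require Import all_classical all_reals all_analysis.
Set Implicit Arguments. Unset Strict Implicit. Unset Printing Implicit Defensive.
Import Order.TTheory GRing.Theory Num.Theory.
Local Open Scope ring_scope.

(* Models f_1..f_Λ are indexed by 'I_Λ.
   [A w i j] is the output (an index, i or j) of the comparison subroutine on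
   the pair (f_i, f_j) (pivot f_i first) at sample point w.
   [piv w S] is the (random) pivot chosen from the current set S.
   Each iteration: pivot f, S' = {f' in S \ {f} | A(f,f') = f'};
   if S' is empty output f, otherwise S <- S'.  (When |S| = 1 the pivot is the
   unique element and S' is empty, so its unique element is output.)
   [n] is fuel; since |S| strictly decreases, fuel Λ is never exhausted when
   starting from the full set. *)
Fixpoint tournament_rec (Λ : nat) (A : 'I_Λ -> 'I_Λ -> 'I_Λ)
    (piv : {set 'I_Λ} -> 'I_Λ) (n : nat) (S : {set 'I_Λ}) : 'I_Λ :=
  match n with
  | 0 => piv S
  | n'.+1 =>
      let f := piv S in
      let S' := [set f' in S :\ f | A f f' == f'] in
      if S' == finset.set0 then f else tournament_rec A piv n' S'
  end.

Definition tournament (T : Type) (Λ : nat) (A : T -> 'I_Λ -> 'I_Λ -> 'I_Λ)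
    (piv : T -> {set 'I_Λ} -> 'I_Λ) (w : T) : 'I_Λ :=
  tournament_rec (A w) (piv w) Λ [set: 'I_Λ].

(* Main.v *)
Require Import Defs.
From HB Require Import structures.
From mathcomp Require Import all_boot all_order all_algebra.
From mathcomp Require Import all_classical all_reals all_analysis.
From mathcomp Require Import ring lra.
Import Order.TTheory GRing.Theory Num.Theory.
Local Open Scope ring_scope.
Local Open Scope classical_set_scope.

Lemma det_rec (R : realType) (Λ : nat) (L : 'I_Λ -> R) (u : R)
  (A' : 'I_Λ -> 'I_Λ -> 'I_Λ) (piv' : {set 'I_Λ} -> 'I_Λ) (fs : 'I_Λ) :
  0 <= u -> (forall l, L fs <= L l) ->
  (forall i j, A' i j = i \/ A' i j = j) ->
  (forall i j, L (A' i j) - Num.min (L i) (L j) <= u) ->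
  (forall S, S != finset.set0 -> piv' S \in S) ->
  forall n S, S != finset.set0 -> (#|S| <= n)%N ->
  (fs \in S \/ forall x, x \in S -> L x <= L fs + 2 * u) ->
  L (tournament_rec A' piv' n S) <= L fs + 2 * u.
Proof.
move=> u0 fsmin Aij AL pivS.
have ALl i j : L (A' i j) <= L i + u.
  have := AL i j; have : Num.min (L i) (L j) <= L i by rewrite ge_min lexx.
  lra.
have ALr i j : L (A' i j) <= L j + u.
  have := AL i j; have : Num.min (L i) (L j) <= L j by rewrite ge_min lexx orbT.
  lra.
elim=> [|n IH] S SN.
  by rewrite leqn0 cards_eq0 (negbTE SN).
move=> cS inv /=.
set f := piv' S.
set S' := [set f' in S :\ f | A' f f' == f'].
have fS : f \in S by exact: pivS.
have key : fs \in S -> fs \notin S' -> f != fs -> L f <= L fs + u.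
  move=> fsS fsS' ffs.
  have : A' f fs != fs.
    apply: contra fsS' => /eqP E; rewrite inE in_setD1 eq_sym ffs fsS /= E //.
  case: (Aij f fs) => E; last by rewrite E eqxx.
  by move=> _; have := ALr f fs; rewrite E.
case: eqP => [S'0|/eqP S'0].
  case: inv => [fsS|bnd]; last by apply: bnd.
  have [->|ffs] := eqVneq f fs; first lra.
  have := key fsS; rewrite S'0 inE => /(_ isT ffs); lra.
apply: IH => //.
  have sub : S' \subset S :\ f by apply/fintype.subsetP => x; rewrite inE => /andP[].
  have := subset_leq_card sub; move: cS; rewrite (cardsD1 f S) fS /=.
  by move=> h1 h2; apply: leq_trans h2 _; rewrite -ltnS.
have [fsS'|fsS'] := boolP (fs \in S'); first by left.
right => x xS'.
have xS : x \in S by move: xS'; rewrite !inE => /andP[/andP[]].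
have Afx : A' f x = x by move: xS'; rewrite inE => /andP[_ /eqP].
case: inv => [fsS|bnd]; last by apply: bnd.
have [E|ffs] := eqVneq f fs.
  have := ALl f x; rewrite Afx E; lra.
have := key fsS fsS' ffs; have := ALl f x; rewrite Afx; lra.
Qed.

Lemma fiber_meas d (T : measurableType d) (X : finType) (g : T -> X) :
  (forall x, measurable [set w | g w = x]) ->
  forall Q : X -> Prop, measurable [set w | Q (g w)].
Proof.
move=> mg Q.
have -> : [set w | Q (g w)] = \bigcup_(x in [set x | Q x]) [set w | g w = x].
  apply/seteqP; split=> w /=.
    by move=> Qw; exists (g w).
  by case=> x Qx E; rewrite /= E.
by apply: fin_bigcup_measurable => //; exact: finite_finset.
Qed.

Lemma union_bound (R : realType) d (T : measurableType d) (P : probability T R)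
  (X : Type) (F : X -> set T) (s : seq X) :
  (forall x, measurable (F x)) ->
  (P (\big[setU/set0]_(x <- s) F x) <= \sum_(x <- s) P (F x))%E.
Proof.
move=> mF; elim: s => [|x s IH]; first by rewrite !big_nil measure0.
rewrite !big_cons; apply: le_trans (measureU2 _ _ _) _ => //.
  by apply: bigsetU_measurable.
exact: leeD.
Qed.

Lemma in_bigsetU (T : Type) (X : eqType) (F : X -> set T) (s : seq X) x w :
  x \in s -> F x w -> (\big[setU/set0]_(y <- s) F y) w.
Proof.
elim: s => [//|y s IH]; rewrite inE big_cons => /orP[/eqP E|xs Fw].
  subst; by left.
by right; apply: IH.
Qed.

Theorem mainTheorem11 (R : realType) (d : measure_display) (T : measurableType d)
    (P : probability T R) (Λ : nat) (L : 'I_Λ -> R) (U : R -> R) (δ : R)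
    (A : T -> 'I_Λ -> 'I_Λ -> 'I_Λ) (piv : T -> {set 'I_Λ} -> 'I_Λ) :
  (0 < Λ)%N ->
  (forall x : R, 0 < x < 1 -> 0 <= U x) ->
  0 < δ < 1 ->
  (* the comparison subroutine: measurable, outputs one of its two inputs *)
  (forall i j k, measurable [set w | A w i j = k]) ->
  (forall w i j, A w i j = i \/ A w i j = j) ->
  (forall i j, ((1 - δ)%R%:E <=
      P [set w | (L (A w i j) - Num.min (L i) (L j) <= U δ)%R])%E) ->
  (* the pivot: measurable, lies in the current set, chosen uniformly *)
  (forall (S : {set 'I_Λ}) k, measurable [set w | piv w S = k]) ->
  (forall w (S : {set 'I_Λ}), S != finset.set0 -> piv w S \in S) ->
  (forall (S : {set 'I_Λ}) (i : 'I_Λ), i \in S -> P [set w | piv w S = i] = ((#|S|%:R)^-1)%R%:E) ->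
  ((1 - (Λ ^ 2)%:R * δ)%R%:E <=
     P [set w | forall l : 'I_Λ, (L (tournament A piv w) - L l <= 2 * U δ)%R])%E.
Proof.
move=> Λ0 U0 δ01 mA Aij PA mpiv pivS _.
have u0 : 0 <= U δ by apply: U0.
set T0 := [set w | _].
pose X := ('I_Λ * 'I_Λ)%type.
pose E (p : X) := [set w | (L (A w p.1 p.2) - Num.min (L p.1) (L p.2) <= U δ)%R].
have mE p : measurable (E p).
  exact: (@fiber_meas _ T _ (fun w => A w p.1 p.2) (mA p.1 p.2)
     (fun k => is_true (L k - Num.min (L p.1) (L p.2) <= U δ)%R)).
pose g w := ([ffun S : {set 'I_Λ} => piv w S], [ffun p : X => A w p.1 p.2]).
have mg : forall x, measurable [set w | g w = x].
  move=> [a b].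
  have -> : [set w | g w = (a, b)] =
      (\bigcap_(S in [set: {set 'I_Λ}]) [set w | piv w S = a S]) `&`
      (\bigcap_(p in [set: X]) [set w | A w p.1 p.2 = b p]).
    apply/seteqP; split=> w /=.
      rewrite /g => -[<- <-]; split=> [S _|p _]; by rewrite ffunE.
    move=> [h1 h2]; rewrite /g; congr pair; apply/ffunP => y; rewrite ffunE.
      exact: h1.
    exact: h2.
  apply: measurableI; apply: fin_bigcap_measurable => //; try exact: finite_finset.
have mT0 : measurable T0.
  pose Q := (fun x : {ffun {set 'I_Λ} -> 'I_Λ} * {ffun X -> 'I_Λ} =>
      forall l : 'I_Λ, (L (tournament_rec (fun i j => x.2 (i, j)) (fun S => x.1 S) Λ
         (finset.setTfor 'I_Λ)) - L l <= 2 * U δ)%R).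
  have -> : T0 = [set w | Q (g w)].
    apply/seteqP; split=> w /=; rewrite /Q /tournament /g /=.
      have -> : (fun i j => [ffun p : X => A w p.1 p.2] (i, j)) = A w.
        by apply/funext => i; apply/funext => j; rewrite ffunE.
      have -> : (fun S => [ffun S => piv w S] S) = piv w.
        by apply/funext => S; rewrite ffunE.
      by [].
    have -> : (fun i j => [ffun p : X => A w p.1 p.2] (i, j)) = A w.
      by apply/funext => i; apply/funext => j; rewrite ffunE.
    have -> : (fun S => [ffun S => piv w S] S) = piv w.
      by apply/funext => S; rewrite ffunE.
    by [].
  exact: (@fiber_meas _ T _ g mg Q).
have sub : ~` T0 `<=` \big[setU/set0]_(p : X) (~` E p).
  move=> w nT0; apply: contrapT => nU; apply: nT0 => l.
  have good : forall i j, (L (A w i j) - Num.min (L i) (L j) <= U δ)%R.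
    move=> i j; apply: contrapT => nE; apply: nU.
    by apply: (@in_bigsetU _ _ _ _ (i, j)) => //; rewrite mem_index_enum.
  pose i0 : 'I_Λ := Ordinal Λ0.
  have [fs _ fsmin] := @arg_minP _ _ 'I_Λ i0 xpredT L isT.
  have := @det_rec R Λ L (U δ) (A w) (piv w) fs u0 (fun l => fsmin l isT)
    (Aij w) good (pivS w) Λ (finset.setTfor 'I_Λ).
  have ne : finset.setTfor 'I_Λ != finset.set0.
    by apply/set0Pn; exists i0; rewrite inE.
  move=> /(_ ne); rewrite cardsT card_ord leqnn => /(_ isT).
  rewrite /tournament; move=> /(_ (or_introl (finset.in_setT fs))).
  have := fsmin l isT; lra.
have bnd : (P (~` T0) <= ((Λ ^ 2)%:R * δ)%:E)%E.
  apply: le_trans (le_measure _ _ _ sub) _.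
  - by rewrite inE; apply: measurableC.
  - by rewrite inE; apply: bigsetU_measurable => p _; apply: measurableC.
  apply: le_trans (@union_bound _ _ _ P _ (fun p => ~` E p) _ (fun p => measurableC (mE p))) _.
  apply: (@le_trans _ _ (\sum_(p : X) δ%:E)%E).
    apply: lee_sum => p _.
    rewrite probability_setC //.
    have := PA p.1 p.2 => h.
    have -> : (δ%:E = 1 - (1 - δ)%:E)%E by rewrite -EFinB; congr EFin; ring.
    by apply: leeB.
  rewrite sumEFin lee_fin sumr_const card_prod card_ord.
  by rewrite mulr_natl expnS expn1.
have -> : T0 = ~` (~` T0) by rewrite setCK.
rewrite probability_setC; last exact: measurableC.
rewrite EFinB; apply: leeB => //.
Qed.
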